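(* Let $H=[H_1,\dots,H_N]'$ be a function $\mathbb{R}^m\to\mathbb{R}^N$ each of whose components is convex, and let $\mathcal{A}=\{1,\dots,N\}$. Assume there exist $u^*\in\mathbb{R}^m$ and a set $\mathcal{G}\subset\mathcal{A}$ with $|\mathcal{G}|\ge2$ such that (a) $H_i(u^* )=\max_{1\le j\le N}H_j(u^* )$ for all $i\in\mathcal{G}$; (b) for all $u\ne u^*$ there exists $i\in\mathcal{G}$ such that $H_i(u)>H_i(u^* )$; (c) $u^*$ is not a minimum of any $H_i$, $i\in\mathcal{G}$. Then there exists a non-pure vector $p^*\in\mathcal{S}_{N-1}$ with support $I(p^* )\subseteq\mathcal{G}$ such that \[ \inf_{u\in\mathbb{R}^m}\sup_{p\in\mathcal{S}_{N-1}}p'H(u)=(p^* )'H(u^* )=\sup_{p\in\mathcal{S}_{N-1}}\inf_{u\in\mathbb{R}^m}p'H(u). \]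
   Context: $\mathcal{S}_{N-1}=\{p\in\mathbb{R}^N:0\le p_j\le1,\sum_{j=1}^Np_j=1\}$ is the unit simplex. The support of $p$ is $I(p)=\{i:p_i>0\}$. A vector $p\in\mathcal{S}_{N-1}$ is non-pure if it is not a vertex of $\mathcal{S}_{N-1}$, i.e., it has at least two positive components. *)

(* Defs.v *)
From HB Require Import structures.
From mathcomp Require Import all_boot all_order all_algebra.
From mathcomp Require Import all_classical all_reals ereal.
Set Implicit Arguments. Unset Strict Implicit. Unset Printing Implicit Defensive.
Import Order.TTheory GRing.Theory Num.Theory.
Local Open Scope ring_scope.
Local Open Scope classical_set_scope.

Definition convex_fun (R : realType) (m : nat) (f : 'rV[R]_m -> R) : Prop :=
  forall (x y : 'rV[R]_m) (t : R), 0 <= t -> t <= 1 ->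
    f (t *: x + (1 - t) *: y) <= t * f x + (1 - t) * f y.

Definition simplex (R : realType) (N : nat) : set 'rV[R]_N :=
  [set p | (forall j : 'I_N, 0 <= p 0 j <= 1) /\ \sum_(j < N) p 0 j = 1].

Definition pdot (R : realType) (m N : nat) (p : 'rV[R]_N)
  (H : 'I_N -> 'rV[R]_m -> R) (u : 'rV[R]_m) : R :=
  \sum_(j < N) p 0 j * H j u.

Definition supp (R : realType) (N : nat) (p : 'rV[R]_N) : {set 'I_N} :=
  [set i | 0 < p 0 i].

Definition non_pure (R : realType) (N : nat) (p : 'rV[R]_N) : Prop :=
  exists i j : 'I_N, i != j /\ 0 < p 0 i /\ 0 < p 0 j.

(* Main.v *)
Require Import Defs.
From HB Require Import structures.
From mathcomp Require Import all_boot all_order all_algebra.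
From mathcomp Require Import all_classical all_reals ereal.
From mathcomp Require Import ring lra.
Import Order.TTheory GRing.Theory Num.Theory.
Local Open Scope ring_scope.
Local Open Scope classical_set_scope.

Set Implicit Arguments. Unset Strict Implicit.
Section Aux.
Variable R : realType.
Variable T : lmodType R.

Definition cvx (f : T -> R) := forall x y (t : R), 0 <= t -> t <= 1 ->
  f (t *: x + (1 - t) *: y) <= t * f x + (1 - t) * f y.
Definition cvxset (D : set T) := forall x y (t : R), 0 <= t -> t <= 1 ->
  D x -> D y -> D (t *: x + (1 - t) *: y).

Lemma key_ineq (fa fb ga gb : R) : fa < 0 -> gb < 0 -> 0 <= fb -> 0 <= ga ->
  (forall t, 0 <= t -> t <= 1 -> 0 <= t * fa + (1 - t) * fb \/ 0 <= t * ga + (1 - t) * gb) ->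
  gb * fa <= fb * ga.
Proof.
move=> fa0 gb0 fb0 ga0 H; rewrite leNgt; apply/negP => hlt.
set d1 := fb - fa. set d2 := ga - gb.
have d10 : 0 < d1 by rewrite /d1; lra.
have d20 : 0 < d2 by rewrite /d2; lra.
pose t := (fb * d2 - gb * d1) / (2 * (d1 * d2)).
have dd : 0 < 2 * (d1 * d2) by rewrite mulr_gt0 // mulr_gt0.
have ht : t * (2 * (d1 * d2)) = fb * d2 - gb * d1.
  by rewrite /t mulfVK // gt_eqF.
have hlt' : fb * d2 < - gb * d1.
  by rewrite /d1 /d2; nra.
have t0 : 0 <= t.
  rewrite /t divr_ge0 //; last exact: ltW.
  by rewrite /d1 /d2; nra.
have t1 : t <= 1.
  rewrite /t ler_pdivrMr // mul1r /d1 /d2; nra.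
case: (H t t0 t1) => h.
- have : t * (2 * (d1 * d2)) * fa + (1 - t) * (2 * (d1 * d2)) * fb >= 0.
    have -> : t * (2 * (d1 * d2)) * fa + (1 - t) * (2 * (d1 * d2)) * fb = (2 * (d1 * d2)) * (t * fa + (1 - t) * fb) by ring.
    by rewrite mulr_ge0 // ltW.
  have -> : (1 - t) * (2 * (d1 * d2)) = 2 * (d1 * d2) - t * (2 * (d1 * d2)) by ring.
  rewrite ht /d1 /d2; nra.
- have : t * (2 * (d1 * d2)) * ga + (1 - t) * (2 * (d1 * d2)) * gb >= 0.
    have -> : t * (2 * (d1 * d2)) * ga + (1 - t) * (2 * (d1 * d2)) * gb = (2 * (d1 * d2)) * (t * ga + (1 - t) * gb) by ring.
    by rewrite mulr_ge0 // ltW.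
  have -> : (1 - t) * (2 * (d1 * d2)) = 2 * (d1 * d2) - t * (2 * (d1 * d2)) by ring.
  rewrite ht /d1 /d2; nra.
Qed.

Lemma pair_ineq (D : set T) f g : cvxset D -> cvx f -> cvx g ->
  (forall u, D u -> 0 <= f u \/ 0 <= g u) ->
  forall a b, D a -> D b -> f a < 0 -> g b < 0 ->
  - g b / (f b - g b) <= g a / (g a - f a).
Proof.
move=> cD cf cg cov a b Da Db fa0 gb0.
have ga0 : 0 <= g a by case: (cov a Da) => // h; lra.
have fb0 : 0 <= f b by case: (cov b Db) => // h; lra.
have k : g b * f a <= f b * g a.
  apply: key_ineq => // t t0 t1.
  case: (cov _ (cD a b t t0 t1 Da Db)) => h.
  - by left; apply: le_trans h (cf a b t t0 t1).
  - by right; apply: le_trans h (cg a b t t0 t1).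
rewrite ler_pdivrMr; last lra.
rewrite mulrAC ler_pdivlMr; last lra.
nra.
Qed.

Lemma two (D : set T) f g : cvxset D -> cvx f -> cvx g ->
  (forall u, D u -> 0 <= f u \/ 0 <= g u) ->
  exists l, [/\ 0 <= l, l <= 1 & forall u, D u -> 0 <= l * f u + (1 - l) * g u].
Proof.
move=> cD cf cg cov.
pose S := [set x : R | x = 0 \/ exists b, [/\ D b, g b < 0 & x = - g b / (f b - g b)]].
have S0 : S 0 by left.
have beta1 : forall b, D b -> g b < 0 -> - g b / (f b - g b) <= 1.
  move=> b Db gb0; have fb0 : 0 <= f b by case: (cov b Db) => // h; lra.
  rewrite ler_pdivrMr; lra.
have ub1 : ubound S 1.
  by move=> x [->|[b [Db gb0 ->]]]; [lra| exact: beta1].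
have hs : has_sup S by split; [exists 0 | exists 1].
exists (sup S); split.
- exact: sup_upper_bound.
- by apply: ge_sup => //; exists 0.
move=> u Du.
have l0 : 0 <= sup S by exact: sup_upper_bound.
have l1 : sup S <= 1 by apply: ge_sup => //; exists 0.
have [fu0|fu0] := ltP (f u) 0.
  have gu0 : 0 <= g u by case: (cov u Du) => // h; lra.
  have : sup S <= g u / (g u - f u).
    apply: ge_sup; first by exists 0.
    move=> x [->|[b [Db gb0 ->]]]; last first.
      have := @pair_ineq D f g cD cf cg cov u b Du Db fu0 gb0; by [].
    by rewrite divr_ge0 //; lra.
  rewrite ler_pdivlMr; last lra.
  nra.
have [gu0|gu0] := ltP (g u) 0.
  have : - g u / (f u - g u) <= sup S.
    by apply: sup_upper_bound => //; right; exists u.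
  rewrite ler_pdivrMr; last lra.
  nra.
nra.
Qed.

Lemma multi (I : eqType) (rest : seq I) : forall (i0 : I) (F : I -> T -> R),
  uniq (i0 :: rest) -> (forall i, cvx (F i)) ->
  (forall u, exists2 i, i \in i0 :: rest & 0 <= F i u) ->
  exists w : I -> R, [/\ forall i, 0 <= w i,
     forall i, i \notin i0 :: rest -> w i = 0,
     \sum_(i <- i0 :: rest) w i = 1 &
     forall u, 0 <= \sum_(i <- i0 :: rest) w i * F i u].
Proof.
elim: rest => [|g rest IH] i0 F un cF cov.
  exists (fun i => if i == i0 then 1 else 0); split.
  - by move=> i; case: ifP.
  - by move=> i; rewrite inE => /negbTE ->.
  - by rewrite big_seq1 eqxx.
  - move=> u; rewrite big_seq1 eqxx mul1r.
    by case: (cov u) => i; rewrite inE => /eqP ->.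
move: un; rewrite /= inE negb_or => /andP [/andP [i0g i0r] /andP [gr ur]].
pose D := [set u | forall i, i \in rest -> F i u < 0].
have cD : cvxset D.
  move=> x y t t0 t1 Dx Dy i ir.
  apply: le_lt_trans (cF i x y t t0 t1) _.
  have := Dx i ir; have := Dy i ir; nra.
have covD : forall u, D u -> 0 <= F i0 u \/ 0 <= F g u.
  move=> u Du; case: (cov u) => i; rewrite !inE => /orP [/eqP ->|/orP [/eqP ->|ir]].
  - by left.
  - by right.
  - by move=> h; have := Du i ir; lra.
have [l [l0 l1 hl]] := two cD (cF i0) (cF g) covD.
pose F' := fun i => if i == i0 then (fun u => l * F i0 u + (1 - l) * F g u) else F i.
have cF' : forall i, cvx (F' i).
  move=> i; rewrite /F'; case: ifP => _ //.
  move=> x y t t0 t1.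
  have := cF i0 x y t t0 t1; have := cF g x y t t0 t1.
  set a := F i0 _; set b := F g _ => ha hb.
  have h1 : l * a <= l * (t * F i0 x + (1 - t) * F i0 y) by rewrite ler_wpM2l.
  have h2 : (1 - l) * b <= (1 - l) * (t * F g x + (1 - t) * F g y) by rewrite ler_wpM2l // subr_ge0.
  lra.
have un' : uniq (i0 :: rest) by rewrite /= i0r ur.
have cov' : forall u, exists2 i, i \in i0 :: rest & 0 <= F' i u.
  move=> u; have [Du|nD] := pselect (D u).
    by exists i0; rewrite ?inE ?eqxx // /F' eqxx; exact: hl.
  case/existsNP: nD => i /not_implyP [ir h].
  exists i; first by rewrite inE ir orbT.
  have -> : F' i = F i.
    rewrite /F'; case: eqP => // ei; by move: i0r; rewrite -ei ir.
  by rewrite leNgt; apply/negP.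
have [w' [w0 wn ws wu]] := IH i0 F' un' cF' cov'.
have nei : forall i, i \in rest -> (i == i0) = false /\ (i == g) = false.
  move=> i ir; split; apply/negP => /eqP ei; subst i.
  - by rewrite ir in i0r.
  - by rewrite ir in gr.
have gi0 : (g == i0) = false by apply/negP => /eqP e; rewrite e eqxx in i0g.
exists (fun i => if i == i0 then l * w' i0 else if i == g then (1 - l) * w' i0 else w' i).
split.
- move=> i; case: ifP => _; first by rewrite mulr_ge0.
  by case: ifP => _ //; rewrite mulr_ge0 // subr_ge0.
- move=> i; rewrite !inE !negb_or => /andP [ni0 /andP [ng ni]].
  rewrite (negbTE ni0) (negbTE ng); apply: wn.
  by rewrite inE negb_or ni0.
- rewrite !big_cons eqxx gi0 eqxx.
  rewrite (@eq_big_seq _ _ _ _ _ _ w'); last first.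
    by move=> i ir; have [-> ->] := nei i ir.
  move: ws; rewrite big_cons => ws; lra.
- move=> u; rewrite !big_cons eqxx gi0 eqxx.
  rewrite (@eq_big_seq _ _ _ _ _ _ (fun i => w' i * F' i u)); last first.
    by move=> i ir /=; have [-> _] := nei i ir; rewrite /F'; have [-> ->] := nei i ir.
  have := wu u; rewrite big_cons /F' eqxx => h.
  set s := \sum_(i <- rest) _ in h *.
  have -> : l * w' i0 * F i0 u + ((1 - l) * w' i0 * F g u + s) =
    w' i0 * (l * F i0 u + (1 - l) * F g u) + s by ring.
  exact: h.
Qed.
End Aux.

Theorem lemma1 (R : realType) (m N : nat) (H : 'I_N -> 'rV[R]_m -> R)
  (hconv : forall i, convex_fun (H i))
  (ustar : 'rV[R]_m) (G : {set 'I_N})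
  (hG : (2 <= #|G|)%N)
  (ha : forall i, i \in G -> forall j : 'I_N, H j ustar <= H i ustar)
  (hb : forall u, u != ustar -> exists2 i, i \in G & H i ustar < H i u)
  (hc : forall i, i \in G -> ~ (forall u, H i ustar <= H i u)) :
  exists pstar : 'rV[R]_N,
    [/\ pstar \in @simplex R N, non_pure pstar, supp pstar \subset G,
        ereal_inf [set ereal_sup [set (pdot p H u)%:E | p in @simplex R N]
                  | u in [set: 'rV[R]_m]] = (pdot pstar H ustar)%:E
      & (pdot pstar H ustar)%:E =
        ereal_sup [set ereal_inf [set (pdot p H u)%:E | u in [set: 'rV[R]_m]]
                  | p in @simplex R N]].
Proof.
have [i1 Gi1] : exists i1, i1 \in G.
  by apply/card_gt0P; rewrite (leq_trans _ hG).
pose c := H i1 ustar.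
have hceq : forall i, i \in G -> H i ustar = c.
  by move=> i Gi; apply/eqP; rewrite eq_le ha // ha.
pose F := fun i u => H i u - c.
have cF : forall i, cvx (F i).
  move=> i x y t t0 t1; rewrite /F.
  have := hconv i x y t t0 t1; lra.
have un : uniq (enum G) := enum_uniq _.
have cov : forall u, exists2 i, i \in enum G & 0 <= F i u.
  move=> u; have [->|nu] := eqVneq u ustar.
    by exists i1; rewrite ?mem_enum // /F /c subrr.
  have [i Gi hi] := hb u nu; exists i; first by rewrite mem_enum.
  by rewrite /F -(hceq i Gi) subr_ge0 ltW.
have [w [w0 wn ws wu]] : exists w : 'I_N -> R, [/\ forall i, 0 <= w i,
     forall i, i \notin G -> w i = 0,
     \sum_(i in G) w i = 1 &
     forall u, 0 <= \sum_(i in G) w i * F i u].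
  move: un cov; case E: (enum G) => [|i0 rest] un cov.
    by have := cov 0; case.
  have [w [w0 wn ws wu]] := multi un cF cov.
  exists w; split => //.
  - by move=> i Gi; apply: wn; rewrite -E mem_enum.
  - by rewrite -big_enum E.
  - by move=> u; rewrite -big_enum E.
have sumG : forall X : 'I_N -> R, \sum_(j < N) w j * X j = \sum_(j in G) w j * X j.
  move=> X; rewrite (bigID (mem G)) /= [X in _ + X]big1 ?addr0 //.
  by move=> j nj; rewrite wn // mul0r.
have sumG1 : \sum_(j < N) w j = 1.
  rewrite -ws (bigID (mem G)) /= [X in _ + X]big1 ?addr0 //.
pose pstar : 'rV[R]_N := \row_j w j.
have pE : forall j, pstar 0 j = w j by move=> j; rewrite mxE.
have ge : forall u, c <= pdot pstar H u.
  move=> u; rewrite /pdot (eq_bigr (fun j => w j * H j u)); last by move=> j _; rewrite pE.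
  have := wu u; rewrite sumG.
  rewrite /F (eq_bigr (fun j => w j * H j u - c * w j)); last by move=> j _; ring.
  by rewrite sumrB -mulr_sumr ws mulr1 subr_ge0.
have le : forall p, @simplex R N p -> pdot p H ustar <= c.
  move=> p [p01 p1]; rewrite /pdot.
  apply: le_trans (_ : \sum_(j < N) p 0 j * c <= c).
    apply: ler_sum => j _; apply: ler_wpM2l; first by case/andP: (p01 j).
    exact: ha.
  by rewrite -mulr_suml p1 mul1r.
have sp : @simplex R N pstar.
  split; last by rewrite (eq_bigr w) // => j _; rewrite pE.
  move=> j; rewrite pE w0 /=.
  have [Gj|nj] := boolP (j \in G); last by rewrite wn.
  rewrite -ws (bigD1 j) //= lerDl; apply: sumr_ge0 => *; exact: w0.
have pv : pdot pstar H ustar = c by apply/eqP; rewrite eq_le le // ge.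
exists pstar; split.
- by rewrite inE.
- have [i Gi wi0] : exists2 i, i \in G & 0 < w i.
    case: (pselect (exists2 i, i \in G & 0 < w i)) => // nex; exfalso.
    move: ws; rewrite big1 => [/eqP|j Gj]; first by rewrite eq_sym oner_eq0.
    apply/eqP; rewrite eq_le w0 andbT leNgt; apply/negP => h.
    by apply: nex; exists j.
  have [[j [ji wj]]|nj] := pselect (exists j, j != i /\ 0 < w j).
    by exists i, j; rewrite !pE eq_sym.
  have wz : forall j, j != i -> w j = 0.
    move=> j ji; apply/eqP; rewrite eq_le w0 andbT leNgt; apply/negP => h.
    by apply: nj; exists j.
  exfalso; apply: (hc i Gi) => u.
  have wi1 : w i = 1.
    rewrite -ws (bigD1 i) // big1 => [|j /andP [_ ji]]; last exact: wz.
    by rewrite [RHS]addr0.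
  have := wu u.
  rewrite (bigD1 i) // big1 => [|j /andP [_ ji]]; last by rewrite wz // mul0r.
  rewrite [X in _ <= X]addr0.
  by rewrite wi1 mul1r /F hceq // subr_ge0.
- by apply/fintype.subsetP => j; rewrite inE pE => h; apply: contraLR h => /wn ->; rewrite ltxx.
- rewrite pv; apply/eqP; rewrite eq_le; apply/andP; split.
  + apply: ge_ereal_inf; exists (ereal_sup [set (pdot p H ustar)%:E | p in @simplex R N]).
      by exists ustar.
    by apply: ge_ereal_sup => _ [p Sp <-]; rewrite lee_fin le.
  + apply: le_ereal_inf_tmp => _ [u _ <-].
    apply: le_ereal_sup_tmp; exists (pdot pstar H u)%:E; first by exists pstar.
    by rewrite lee_fin ge.
- rewrite pv; apply/eqP; rewrite eq_le; apply/andP; split.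
  + apply: le_ereal_sup_tmp; exists (ereal_inf [set (pdot pstar H u)%:E | u in [set: 'rV[R]_m]]).
      by exists pstar.
    by apply: le_ereal_inf_tmp => _ [u _ <-]; rewrite lee_fin ge.
  + apply: ge_ereal_sup => _ [p Sp <-].
    apply: ge_ereal_inf; exists (pdot p H ustar)%:E; first by exists ustar.
    by rewrite lee_fin le.
Qed.
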